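(* For $i=1,2$ let $\alpha_i\in[-1,1]$ and let $f_{\alpha_i}=h_{\alpha_i}+\overline{g_{\alpha_i}}\in S_H$ with $h_{\alpha_i}(z)+g_{\alpha_i}(z)=\dfrac{z(1-\alpha_i z)}{1-z^2}$ for $z\in E$. Let $0\le t\le 1$ and $f=tf_{\alpha_1}+(1-t)f_{\alpha_2}$. If $f$ is locally univalent and sense-preserving in $E$, then $f\in S_H$ and $f$ maps $E$ onto a domain convex in the direction of the imaginary axis.
   Context: $E=\{z\in\mathbb{C}:|z|<1\}$. A harmonic mapping $f=h+\overline{g}$ on $E$ (with $h,g$ analytic) is locally univalent and sense-preserving iff $h'\neq0$ in $E$ and its dilatation $\omega=g'/h'$ satisfies $|\omega|<1$ in $E$. $S_H$ denotes the class of harmonic, univalent, sense-preserving mappings $f=h+\overline{g}$ of $E$ normalized by $f(0)=0$, $f_z(0)=1$. A domain $\Omega$ is convex in the direction of the imaginary axis if every line parallel to the imaginary axis has connected or empty intersection with $\Omega$. *)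

(* Defs.v *)
From Stdlib Require Import Reals Lra.
Open Scope R_scope.

Definition Cplx : Type := (R * R)%type.
Definition RtoC (x : R) : Cplx := (x, 0).
Definition C0 : Cplx := (0, 0).
Definition C1 : Cplx := (1, 0).
Definition Cadd (z w : Cplx) : Cplx := (fst z + fst w, snd z + snd w).
Definition Copp (z : Cplx) : Cplx := (- fst z, - snd z).
Definition Csub (z w : Cplx) : Cplx := Cadd z (Copp w).
Definition Cmul (z w : Cplx) : Cplx :=
  (fst z * fst w - snd z * snd w, fst z * snd w + snd z * fst w).
Definition Cinv (z : Cplx) : Cplx :=
  (fst z / (fst z ^ 2 + snd z ^ 2), - snd z / (fst z ^ 2 + snd z ^ 2)).
Definition Cdiv (z w : Cplx) : Cplx := Cmul z (Cinv w).
Definition Cconj (z : Cplx) : Cplx := (fst z, - snd z).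
Definition Cnorm (z : Cplx) : R := sqrt (fst z ^ 2 + snd z ^ 2).

Definition inE (z : Cplx) : Prop := Cnorm z < 1.

Definition cderiv_at (f : Cplx -> Cplx) (z l : Cplx) : Prop :=
  forall eps, 0 < eps -> exists delta, 0 < delta /\
    forall w, Cnorm (Csub w z) < delta ->
      Cnorm (Csub (Csub (f w) (f z)) (Cmul l (Csub w z))) <= eps * Cnorm (Csub w z).

Definition analytic_on_E (f : Cplx -> Cplx) : Prop :=
  forall z, inE z -> exists l, cderiv_at f z l.

Definition harm (h g : Cplx -> Cplx) : Cplx -> Cplx := fun z => Cadd (h z) (Cconj (g z)).

Definition loc_univ_sense_pres (h g : Cplx -> Cplx) : Prop :=
  forall z, inE z -> forall a b, cderiv_at h z a -> cderiv_at g z b ->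
    a <> C0 /\ Cnorm (Cdiv b a) < 1.

Definition in_SH (h g : Cplx -> Cplx) : Prop :=
  analytic_on_E h /\ analytic_on_E g /\
  (forall z w, inE z -> inE w -> harm h g z = harm h g w -> z = w) /\
  loc_univ_sense_pres h g /\
  harm h g C0 = C0 /\
  cderiv_at h C0 C1.

Definition imageE (f : Cplx -> Cplx) (w : Cplx) : Prop := exists z, inE z /\ f z = w.

Definition open_set (S : Cplx -> Prop) : Prop :=
  forall w, S w -> exists r, 0 < r /\ forall v, Cnorm (Csub v w) < r -> S v.

Definition connected_set (S : Cplx -> Prop) : Prop :=
  forall U V : Cplx -> Prop, open_set U -> open_set V ->
    (forall w, S w -> U w \/ V w) ->
    (exists w, S w /\ U w) -> (exists w, S w /\ V w) ->
    exists w, S w /\ U w /\ V w.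

Definition domain (S : Cplx -> Prop) : Prop :=
  open_set S /\ connected_set S /\ exists w, S w.

Definition convex_imag_dir (S : Cplx -> Prop) : Prop :=
  forall x y1 y2 y, S (x, y1) -> S (x, y2) -> y1 <= y -> y <= y2 -> S (x, y).

Definition lincomb (t : R) (f1 f2 : Cplx -> Cplx) : Cplx -> Cplx :=
  fun z => Cadd (Cmul (RtoC t) (f1 z)) (Cmul (RtoC (1 - t)) (f2 z)).

Definition shear_target (alpha : R) (z : Cplx) : Cplx :=
  Cdiv (Cmul z (Csub C1 (Cmul (RtoC alpha) z))) (Csub C1 (Cmul z z)).

(* Main.v *)
From Pilot Require Import Defs.
From Stdlib Require Import Reals Lra FunctionalExtensionality Classical.
From Coquelicot Require Import Coquelicot.
Open Scope R_scope.

Ltac ceq := unfold Defs.Csub, Defs.Cadd, Defs.Cmul, Defs.Copp, Defs.Cconj, Defs.Cdiv, Defs.Cinv, Defs.RtoC, Defs.C0, Defs.C1;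
  apply injective_projections; simpl; ring.

Lemma Cn_tri x y : Cnorm (Cadd x y) <= Cnorm x + Cnorm y.
Proof. apply Cmod_triangle. Qed.
Lemma Cn_mul x y : Cnorm (Cmul x y) = Cnorm x * Cnorm y.
Proof. apply Cmod_mult. Qed.
Lemma Cn_ge0 x : 0 <= Cnorm x.
Proof. apply Cmod_ge_0. Qed.
Lemma Cn_conj x : Cnorm (Defs.Cconj x) = Cnorm x.
Proof. apply Cmod_conj. Qed.
Lemma Cn_opp x : Cnorm (Defs.Copp x) = Cnorm x.
Proof. apply Cmod_opp. Qed.
Lemma Cn_RtoC x : Cnorm (Defs.RtoC x) = Rabs x.
Proof. apply Cmod_R. Qed.
Lemma Cn_fst x : Rabs (fst x) <= Cnorm x.
Proof. apply re_le_Cmod. Qed.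
Lemma Cn_snd x : Rabs (snd x) <= Cnorm x.
Proof. pose proof (Rmax_Cmod x). pose proof (Rmax_r (Rabs (fst x)) (Rabs (snd x))). unfold Cnorm. unfold Cmod in H. lra. Qed.
Lemma Cn_le_sum x : Cnorm x <= Rabs (fst x) + Rabs (snd x).
Proof.
  unfold Cnorm. rewrite <- (sqrt_Rsqr (Rabs (fst x) + Rabs (snd x))).
  2: { pose proof (Rabs_pos (fst x)); pose proof (Rabs_pos (snd x)); lra. }
  apply sqrt_le_1_alt. rewrite <- (pow2_abs (fst x)), <- (pow2_abs (snd x)).
  unfold Rsqr. pose proof (Rabs_pos (fst x)); pose proof (Rabs_pos (snd x)). nra.
Qed.
Lemma Cn_sub_sym x y : Cnorm (Csub x y) = Cnorm (Csub y x).
Proof. replace (Csub x y) with (Defs.Copp (Csub y x)) by ceq. apply Cn_opp. Qed.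

Lemma cderiv_add f g z l1 l2 : cderiv_at f z l1 -> cderiv_at g z l2 ->
  cderiv_at (fun w => Cadd (f w) (g w)) z (Cadd l1 l2).
Proof.
  intros H1 H2 eps He.
  destruct (H1 (eps/2)) as [d1 [Hd1 P1]]; [lra|].
  destruct (H2 (eps/2)) as [d2 [Hd2 P2]]; [lra|].
  exists (Rmin d1 d2). split. apply Rmin_pos; auto.
  intros w Hw.
  replace (Csub (Csub (Cadd (f w) (g w)) (Cadd (f z) (g z))) (Cmul (Cadd l1 l2) (Csub w z)))
   with (Cadd (Csub (Csub (f w) (f z)) (Cmul l1 (Csub w z))) (Csub (Csub (g w) (g z)) (Cmul l2 (Csub w z)))) by ceq.
  eapply Rle_trans. apply Cn_tri.
  pose proof (P1 w (Rlt_le_trans _ _ _ Hw (Rmin_l _ _))).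
  pose proof (P2 w (Rlt_le_trans _ _ _ Hw (Rmin_r _ _))). lra.
Qed.

Lemma cderiv_cmul c f z l : cderiv_at f z l -> cderiv_at (fun w => Cmul c (f w)) z (Cmul c l).
Proof.
  intros H1 eps He.
  destruct (H1 (eps/(Cnorm c + 1))) as [d1 [Hd1 P1]].
  { apply Rdiv_lt_0_compat; auto. pose proof (Cn_ge0 c). lra. }
  exists d1. split; auto. intros w Hw.
  replace (Csub (Csub (Cmul c (f w)) (Cmul c (f z))) (Cmul (Cmul c l) (Csub w z)))
   with (Cmul c (Csub (Csub (f w) (f z)) (Cmul l (Csub w z)))) by ceq.
  rewrite Cn_mul. pose proof (P1 w Hw). pose proof (Cn_ge0 c).
  pose proof (Cn_ge0 (Csub w z)).
  apply Rle_trans with (Cnorm c * (eps / (Cnorm c + 1) * Cnorm (Csub w z))).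
  apply Rmult_le_compat_l; auto.
  assert (Cnorm c * (eps / (Cnorm c + 1)) <= eps).
  { unfold Rdiv. rewrite <- Rmult_assoc. apply Rmult_le_reg_r with (Cnorm c + 1). lra.
    rewrite Rmult_assoc, Rinv_l by lra. nra. }
  nra.
Qed.

Lemma cderiv_cont f z l : cderiv_at f z l -> forall eps, 0 < eps -> exists d, 0 < d /\
  forall w, Cnorm (Csub w z) < d -> Cnorm (Csub (f w) (f z)) < eps.
Proof.
  intros H eps He. destruct (H 1) as [d1 [Hd1 P1]]; [lra|].
  set (K := Cnorm l + 1). assert (0 < K) by (pose proof (Cn_ge0 l); unfold K; lra).
  exists (Rmin d1 (eps / K)). split. apply Rmin_pos; auto. apply Rdiv_lt_0_compat; auto.
  intros w Hw. pose proof (P1 w (Rlt_le_trans _ _ _ Hw (Rmin_l _ _))).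
  replace (Csub (f w) (f z)) with (Cadd (Csub (Csub (f w) (f z)) (Cmul l (Csub w z))) (Cmul l (Csub w z))) by ceq.
  eapply Rle_lt_trans. apply Cn_tri. rewrite Cn_mul.
  assert (Cnorm (Csub w z) < eps / K) by (eapply Rlt_le_trans; [exact Hw| apply Rmin_r]).
  pose proof (Cn_ge0 (Csub w z)). pose proof (Cn_ge0 l).
  assert (K * Cnorm (Csub w z) < eps).
  { apply Rmult_lt_reg_l with (/K). apply Rinv_0_lt_compat; auto.
    rewrite <- Rmult_assoc, Rinv_l by lra. lra. }
  unfold K in *. nra.
Qed.

Ltac ceqf := unfold Defs.Csub, Defs.Cadd, Defs.Cmul, Defs.Copp, Defs.Cconj, Defs.Cdiv, Defs.Cinv, Defs.RtoC, Defs.C0, Defs.C1;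
  apply injective_projections; simpl; field.

Lemma chainC (h : Cplx -> Cplx) (c1 c2 : R -> R) t0 l d1 d2 :
  cderiv_at h (c1 t0, c2 t0) l -> derivable_pt_lim c1 t0 d1 -> derivable_pt_lim c2 t0 d2 ->
  forall eps, 0 < eps -> exists del : posreal, forall tau, tau <> 0 -> Rabs tau < del ->
   Cnorm (Csub (Cmul (Defs.RtoC (/tau)) (Csub (h (c1 (t0+tau), c2 (t0+tau))) (h (c1 t0, c2 t0)))) (Cmul l (d1,d2))) < eps.
Proof.
  intros Hh H1 H2 eps He.
  set (d := (d1,d2) : Cplx).
  assert (Hd : 0 <= Cnorm d) by apply Cn_ge0.
  assert (Hl : 0 <= Cnorm l) by apply Cn_ge0.
  set (eta := eps / (2 * (Cnorm d + 1))).
  assert (Heta : 0 < eta) by (unfold eta; apply Rdiv_lt_0_compat; lra).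
  destruct (Hh eta Heta) as [dh [Hdh Ph]].
  set (e' := Rmin 1 (eps / (2 * (Cnorm l + 1))) / 2).
  assert (He'1 : e' <= 1/2) by (unfold e'; pose proof (Rmin_l 1 (eps / (2 * (Cnorm l + 1)))); lra).
  assert (He'2 : 2 * e' * (Cnorm l + 1) <= eps/2).
  { unfold e'. pose proof (Rmin_r 1 (eps / (2 * (Cnorm l + 1)))).
    assert (eps / (2 * (Cnorm l + 1)) * (Cnorm l + 1) = eps/2) by (field; lra).
    assert (0 <= Cnorm l + 1) by lra.
    apply Rle_trans with (eps / (2 * (Cnorm l + 1)) * (Cnorm l + 1)); [|lra].
    apply Rmult_le_compat_r; lra. }
  assert (He'0 : 0 < e').
  { unfold e'. apply Rmult_lt_0_compat; [|lra]. apply Rmin_pos; [lra|].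
    apply Rdiv_lt_0_compat; lra. }
  destruct (H1 e' He'0) as [del1 P1]. destruct (H2 e' He'0) as [del2 P2].
  assert (Hdd : 0 < dh / (Cnorm d + 1)) by (apply Rdiv_lt_0_compat; lra).
  exists (mkposreal _ (Rmin_pos _ _ (Rmin_pos _ _ (cond_pos del1) (cond_pos del2)) Hdd)).
  simpl. intros tau Ht Hta.
  assert (Ht1 : Rabs tau < del1) by (eapply Rlt_le_trans; [exact Hta|]; eapply Rle_trans; apply Rmin_l).
  assert (Ht2 : Rabs tau < del2) by (eapply Rlt_le_trans; [exact Hta|]; eapply Rle_trans; [apply Rmin_l| apply Rmin_r]).
  assert (Ht3 : Rabs tau < dh / (Cnorm d + 1)) by (eapply Rlt_le_trans; [exact Hta| apply Rmin_r]).
  specialize (P1 tau Ht Ht1). specialize (P2 tau Ht Ht2).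
  set (z0 := (c1 t0, c2 t0) : Cplx). set (z := (c1 (t0+tau), c2 (t0+tau)) : Cplx).
  set (q := Cmul (Defs.RtoC (/tau)) (Csub z z0)).
  assert (Hq : Cnorm (Csub q d) < 2 * e').
  { eapply Rle_lt_trans. apply Cn_le_sum. unfold q, z, z0, d.
    unfold Csub, Cadd, Cmul, Defs.Copp, Defs.RtoC. simpl.
    replace (/ tau * (c1 (t0 + tau) + - c1 t0) - 0 * (c2 (t0 + tau) + - c2 t0) + - d1)
     with ((c1 (t0 + tau) - c1 t0) / tau - d1) by (field; auto).
    replace (/ tau * (c2 (t0 + tau) + - c2 t0) + 0 * (c1 (t0 + tau) + - c1 t0) + - d2)
     with ((c2 (t0 + tau) - c2 t0) / tau - d2) by (field; auto). lra. }
  assert (Hqn : Cnorm q <= Cnorm d + 1).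
  { replace q with (Cadd d (Csub q d)) by (unfold q; ceq). eapply Rle_trans. apply Cn_tri. lra. }
  assert (Hzq : Csub z z0 = Cmul (Defs.RtoC tau) q) by (unfold q; ceqf; auto).
  assert (Htau0 : 0 < Rabs tau) by (apply Rabs_pos_lt; auto).
  assert (Hzz : Cnorm (Csub z z0) < dh).
  { rewrite Hzq, Cn_mul, Cn_RtoC.
    apply Rle_lt_trans with (Rabs tau * (Cnorm d + 1)). apply Rmult_le_compat_l; lra.
    apply Rmult_lt_reg_r with (/(Cnorm d + 1)). apply Rinv_0_lt_compat; lra.
    rewrite Rmult_assoc, Rinv_r by lra. lra. }
  specialize (Ph z Hzz). fold z0 in Ph.
  set (e := Csub (Csub (h z) (h z0)) (Cmul l (Csub z z0))) in *.
  replace (Csub (Cmul (Defs.RtoC (/ tau)) (Csub (h z) (h z0))) (Cmul l d))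
    with (Cadd (Cmul (Defs.RtoC (/tau)) e) (Cmul l (Csub q d))) by (unfold e, q; ceq).
  eapply Rle_lt_trans. apply Cn_tri. rewrite !Cn_mul, Cn_RtoC.
  rewrite Hzq, Cn_mul, Cn_RtoC in Ph.
  assert (A1 : Rabs (/tau) * Cnorm e <= eta * (Cnorm d + 1)).
  { rewrite Rabs_inv. apply Rmult_le_reg_l with (Rabs tau); auto.
    rewrite <- Rmult_assoc, Rinv_r by lra. rewrite Rmult_1_l.
    apply Rle_trans with (eta * (Rabs tau * Cnorm q)); auto.
    replace (Rabs tau * (eta * (Cnorm d + 1))) with (eta * (Rabs tau * (Cnorm d + 1))) by ring.
    apply Rmult_le_compat_l; [lra|]. apply Rmult_le_compat_l; lra. }
  assert (A2 : eta * (Cnorm d + 1) = eps/2) by (unfold eta; field; lra).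
  assert (A3 : Cnorm l * Cnorm (Csub q d) <= Cnorm l * (2*e')).
  { apply Rmult_le_compat_l; lra. }
  nra.
Qed.

Lemma chain_fst (h : Cplx -> Cplx) (c1 c2 : R -> R) t0 l d1 d2 :
  cderiv_at h (c1 t0, c2 t0) l -> derivable_pt_lim c1 t0 d1 -> derivable_pt_lim c2 t0 d2 ->
  derivable_pt_lim (fun t => fst (h (c1 t, c2 t))) t0 (fst (Cmul l (d1,d2))).
Proof.
  intros Hh H1 H2 eps He. destruct (chainC h c1 c2 t0 l d1 d2 Hh H1 H2 eps He) as [del P].
  exists del. intros tau Ht Hta. specialize (P tau Ht Hta).
  eapply Rle_lt_trans; [|exact P]. eapply Rle_trans; [|apply Cn_fst].
  right. f_equal. unfold Csub, Cadd, Cmul, Defs.Copp, Defs.RtoC. simpl. field. auto.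
Qed.

Lemma chain_snd (h : Cplx -> Cplx) (c1 c2 : R -> R) t0 l d1 d2 :
  cderiv_at h (c1 t0, c2 t0) l -> derivable_pt_lim c1 t0 d1 -> derivable_pt_lim c2 t0 d2 ->
  derivable_pt_lim (fun t => snd (h (c1 t, c2 t))) t0 (snd (Cmul l (d1,d2))).
Proof.
  intros Hh H1 H2 eps He. destruct (chainC h c1 c2 t0 l d1 d2 Hh H1 H2 eps He) as [del P].
  exists del. intros tau Ht Hta. specialize (P tau Ht Hta).
  eapply Rle_lt_trans; [|exact P]. eapply Rle_trans; [|apply Cn_snd].
  right. f_equal. unfold Csub, Cadd, Cmul, Defs.Copp, Defs.RtoC. simpl. field. auto.
Qed.

Definition Mm (z : Cplx) : Cplx := Defs.Cdiv (Csub z Defs.C1) (Cadd z Defs.C1).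
Definition Wm (z : Cplx) : Cplx := Defs.Cdiv (Cadd Defs.C1 z) (Csub Defs.C1 z).

Lemma K2C (a : R) (z : C) : z <> 0%C -> (z + 1)%C <> 0%C ->
  (Cmult (Cminus z 1) (Cinv (Cplus z 1)) * (1 - a * (Cmult (Cminus z 1) (Cinv (Cplus z 1)))) /
   (1 - (Cmult (Cminus z 1) (Cinv (Cplus z 1))) * (Cmult (Cminus z 1) (Cinv (Cplus z 1)))))%C
  = (((1-a)/2 * z - (1+a)/2 / z + a)/2)%C.
  intros H1 H2. field. cbv beta. split; [exact H1|split; [exact H2|]].
  assert (E : (((z + 1) * (z + 1) - (z - 1) * (z - 1)) = 4 * z)%C) by ring.
  rewrite E. intro H. apply H1.
  apply (f_equal (fun w => w / 4)%C) in H.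
  assert (H4 : (4:C) <> 0%C). { intro H4. apply (f_equal fst) in H4. simpl in H4. lra. }
  replace (4 * z / 4)%C with z in H by (field; exact H4). rewrite H. field.
Qed.

Lemma K2 a P Q : 0 < P ->
  shear_target a (Mm (P,Q)) =
   (((1-a)/2*P - (1+a)/2*P/(P^2+Q^2) + a)/2, ((1-a)/2*Q + (1+a)/2*Q/(P^2+Q^2))/2).
Proof.
  intros HP.
  assert (H1 : ((P,Q):C) <> 0%C). { intro H. apply (f_equal fst) in H. simpl in H. lra. }
  assert (H2 : (((P,Q):C) + 1)%C <> 0%C). { intro H. apply (f_equal fst) in H. simpl in H. lra. }
  pose proof (K2C a (P,Q) H1 H2) as E.
  transitivity ((((1-a)/2 * ((P,Q):C) - (1+a)/2 / ((P,Q):C) + a)/2)%C). { exact E. }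
  apply injective_projections; simpl; field.
  all: try (split; [lra|]); nra.
Qed.

Lemma Mm_eq P Q : 0 < P -> Mm (P,Q) = ((P^2+Q^2-1)/((P+1)^2+Q^2), 2*Q/((P+1)^2+Q^2)).
Proof.
  intros HP. unfold Mm, Defs.Cdiv, Csub, Cadd, Defs.Cmul, Defs.Cinv, Defs.Copp, Defs.C1.
  apply injective_projections; simpl; field; nra.
Qed.

Lemma inE_iff x y : inE (x,y) <-> x^2 + y^2 < 1.
Proof.
  unfold inE, Cnorm. cbn [fst snd]. split; intro H.
  - destruct (Rlt_or_le (x^2+y^2) 1) as [H1|H1]; auto.
    assert (sqrt 1 <= sqrt (x^2+y^2)) by (apply sqrt_le_1_alt; exact H1). rewrite sqrt_1 in H0. lra.
  - rewrite <- sqrt_1. apply sqrt_lt_1_alt. split; [nra|lra].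
Qed.

Lemma K1 P Q : 0 < P -> inE (Mm (P,Q)).
Proof.
  intros HP. rewrite Mm_eq by auto. apply inE_iff.
  assert (HD : 0 < (P+1)^2+Q^2) by nra.
  replace (((P ^ 2 + Q ^ 2 - 1) / ((P + 1) ^ 2 + Q ^ 2)) ^ 2 + (2 * Q / ((P + 1) ^ 2 + Q ^ 2)) ^ 2)
    with (((P ^ 2 + Q ^ 2 - 1)^2 + (2*Q)^2) / ((P + 1) ^ 2 + Q ^ 2)^2) by (field; lra).
  apply Rmult_lt_reg_r with (((P + 1) ^ 2 + Q ^ 2)^2). nra.
  unfold Rdiv. rewrite Rmult_assoc, Rinv_l by nra.
  assert (E : 1 * ((P + 1) ^ 2 + Q ^ 2) ^ 2 - ((P ^ 2 + Q ^ 2 - 1) ^ 2 + (2 * Q) ^ 2) = 8*P^2 + 4*P*(P^2+Q^2+1)) by ring.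
  assert (0 < 8*P^2 + 4*P*(P^2+Q^2+1)) by (assert (0 <= P^2+Q^2) by nra; nra). lra.
Qed.

Lemma Wm_eq x y : x^2 + y^2 < 1 -> Wm (x,y) = ((1-x^2-y^2)/((1-x)^2+y^2), 2*y/((1-x)^2+y^2)).
Proof.
  intros H. unfold Wm, Defs.Cdiv, Csub, Cadd, Defs.Cmul, Defs.Cinv, Defs.Copp, Defs.C1.
  apply injective_projections; simpl; field; nra.
Qed.

Lemma K3 z : inE z -> 0 < fst (Wm z) /\ Mm (Wm z) = z.
Proof.
  destruct z as [x y]. intros H. apply inE_iff in H.
  assert (HD : 0 < (1-x)^2 + y^2) by nra.
  rewrite Wm_eq by auto. cbn [fst].
  assert (HP : 0 < (1 - x ^ 2 - y ^ 2) / ((1 - x) ^ 2 + y ^ 2)) by (apply Rdiv_lt_0_compat; lra).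
  split; auto. rewrite Mm_eq by auto.
  apply injective_projections; cbn [fst snd]; field; split; try lra.
Qed.

Definition AA (a : R) := (1-a)/2.
Definition BB (a : R) := (1+a)/2.
Definition XX (a x : R) := 2*x - a.
Definition DD (a x t : R) := XX a x ^2 + 4*AA a*BB a/(1+t^2).
Definition pp (a x t : R) : R :=
  if Req_EM_T (AA a) 0 then -1/(XX a x * (1+t^2))
  else (XX a x + sqrt (DD a x t))/(2*AA a).
Definition valid (a x : R) : Prop :=
  (AA a <> 0 /\ (0 < BB a \/ 0 < XX a x)) \/ (AA a = 0 /\ XX a x < 0).
Definition Rel (a x p t : R) : Prop := AA a*p^2 - XX a x * p - BB a/(1+t^2) = 0.
Definition zc (a x t : R) : Cplx := Mm (pp a x t, pp a x t * t).

Section Curve.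
Variable a : R.
Hypothesis Ha : -1 <= a <= 1.

Lemma AB_nonneg : 0 <= AA a /\ 0 <= BB a /\ AA a + BB a = 1.
Proof. unfold AA, BB. lra. Qed.

Lemma DD_pos x t : valid a x -> AA a <> 0 -> 0 < DD a x t.
Proof.
  intros Hv HA0. pose proof AB_nonneg as [HA [HB HAB]].
  assert (Hs : 0 < 1 + t^2) by nra. unfold DD.
  assert (0 <= 4 * AA a * BB a / (1 + t ^ 2)) by (apply Rdiv_le_0_compat; [nra|lra]).
  destruct Hv as [[_ [Hv|Hv]]|[Hv _]]; [|nra|contradiction].
  assert (0 < 4 * AA a * BB a / (1 + t ^ 2)) by (apply Rdiv_lt_0_compat; [nra|lra]). nra.
Qed.

Lemma L_pp x t : valid a x -> 0 < pp a x t /\ Rel a x (pp a x t) t.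
Proof.
  intros Hv. pose proof AB_nonneg as [HA [HB HAB]].
  assert (Hs : 0 < 1 + t^2) by nra.
  unfold pp, Rel. destruct (Req_EM_T (AA a) 0) as [E|E].
  - destruct Hv as [[Hv _]|[_ Hv]]; [contradiction|].
    assert (BB a = 1) by lra. rewrite H, E.
    split.
    + replace (-1 / (XX a x * (1 + t ^ 2))) with (/ ((- XX a x) * (1+t^2))) by (field; split; lra).
      apply Rinv_0_lt_compat. nra.
    + field. split; lra.
  - assert (HA' : 0 < AA a) by lra.
    pose proof (DD_pos x t Hv E) as HD.
    set (S := sqrt (DD a x t)).
    assert (HS : S * S = DD a x t) by (apply sqrt_sqrt; lra).
    assert (HS0 : 0 <= S) by apply sqrt_pos.
    split.
    + apply Rdiv_lt_0_compat; [|lra].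
      destruct Hv as [[_ [Hv|Hv]]|[Hv _]]; [|nra|contradiction].
      assert (0 < 4 * AA a * BB a / (1 + t ^ 2)) by (apply Rdiv_lt_0_compat; [nra|lra]).
      unfold DD in HS. nra.
    + replace (AA a * ((XX a x + S) / (2 * AA a)) ^ 2 - XX a x * ((XX a x + S) / (2 * AA a)) - BB a / (1 + t ^ 2))
        with ((S*S - DD a x t)/(4 * AA a)) by (unfold DD; field; lra).
      rewrite HS. unfold Rdiv. ring.
Qed.

Lemma L_uniq x p t : 0 < p -> Rel a x p t -> valid a x /\ p = pp a x t.
Proof.
  intros Hp HR. pose proof AB_nonneg as [HA [HB HAB]].
  assert (Hs : 0 < 1 + t^2) by nra.
  assert (Hv : valid a x).
  { unfold Rel in HR. unfold valid.
    destruct (Req_EM_T (AA a) 0) as [E|E].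
    - right. split; auto. rewrite E in HR.
      assert (0 < BB a / (1+t^2)) by (apply Rdiv_lt_0_compat; lra). nra.
    - left. split; auto. destruct (Rlt_or_le 0 (BB a)) as [H|H]; [left; auto|right].
      assert (BB a = 0) by lra. rewrite H0 in HR. 
      assert (0 / (1 + t^2) = 0) by (field; lra). rewrite H1 in HR.
      assert (HA' : 0 < AA a) by lra. nra. }
  split; auto.
  destruct (L_pp x t Hv) as [Hq HRq]. set (q := pp a x t) in *.
  unfold Rel in HR, HRq.
  assert (E : (p - q) * (AA a * (p + q) - XX a x) = 0) by nra.
  apply Rmult_integral in E. destruct E as [E|E]; [lra|].
  exfalso.
  assert (0 <= BB a / (1+t^2)) by (apply Rdiv_le_0_compat; lra).
  (* p (A p - X) = B/s >= 0 , X = A p + A q *)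
  assert (HX : XX a x = AA a * (p+q)) by lra.
  rewrite HX in HR.
  assert (AA a * p * q <= 0) by nra.
  assert (Hpq : 0 < p*q) by (apply Rmult_lt_0_compat; lra).
  assert (AA a = 0).
  { destruct (Rlt_or_le 0 (AA a)); [|lra]. assert (0 < AA a * (p*q)) by (apply Rmult_lt_0_compat; lra). nra. }
  assert (BB a = 1) by lra.
  rewrite H1, H2 in HR. 
  assert (0 < 1 / (1+t^2)) by (apply Rdiv_lt_0_compat; lra). nra.
Qed.

Lemma L_re x p t : 0 < p ->
  (fst (shear_target a (Mm (p, p*t))) = x <-> Rel a x p t).
Proof.
  intros Hp. assert (Hs : 0 < 1 + t^2) by nra.
  rewrite K2 by auto. cbn [fst]. unfold Rel, AA, BB, XX.
  replace ((1 - a) / 2 * p - (1 + a) / 2 * p / (p ^ 2 + (p * t) ^ 2) + a)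
    with (((1-a)/2 * p^2 - (1+a)/2 / (1+t^2) + a * p)/p) by (field; split; nra).
  split; intro H.
  - apply (f_equal (fun u => 2*p*u)) in H.
    replace (2 * p * ((((1 - a) / 2 * p ^ 2 - (1 + a) / 2 / (1 + t ^ 2) + a * p) / p) / 2))
      with (((1 - a) / 2 * p ^ 2 - (1 + a) / 2 / (1 + t ^ 2) + a * p)) in H by (field; lra).
    lra.
  - apply Rmult_eq_reg_l with (2*p); [|lra].
    replace (2 * p * ((((1 - a) / 2 * p ^ 2 - (1 + a) / 2 / (1 + t ^ 2) + a * p) / p) / 2))
      with (((1 - a) / 2 * p ^ 2 - (1 + a) / 2 / (1 + t ^ 2) + a * p)) by (field; lra).
    lra.
Qed.

Lemma L_im p t : 0 < p ->
  snd (shear_target a (Mm (p, p*t))) = (AA a * p * t + BB a * t / (p * (1+t^2)))/2.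
Proof.
  intros Hp. assert (Hs : 0 < 1 + t^2) by nra.
  rewrite K2 by auto. cbn [snd]. unfold AA, BB. field. split; nra.
Qed.

End Curve.

Lemma Cn_sq z : Cnorm z ^ 2 = fst z ^ 2 + snd z ^ 2.
Proof. unfold Cnorm. rewrite <- Rsqr_pow2. rewrite Rsqr_sqrt. reflexivity. nra. Qed.

Lemma Alg (la lb d : Cplx) :
  la <> Defs.C0 -> Cnorm (Defs.Cdiv lb la) < 1 ->
  fst (Cmul la d) + fst (Cmul lb d) = 0 ->
  0 < snd (Cmul la d) + snd (Cmul lb d) ->
  0 < snd (Cmul la d) - snd (Cmul lb d).
Proof.
  intros Hla Hdiv H1 H2.
  assert (Hna : 0 < Cnorm la).
  { apply Cmod_gt_0. exact Hla. }
  assert (Hb : Cnorm lb < Cnorm la).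
  { assert (E : Cnorm (Defs.Cdiv lb la) = Cnorm lb / Cnorm la) by (apply Cmod_div; exact Hla).
    rewrite E in Hdiv. apply Rmult_lt_reg_r with (/ Cnorm la). apply Rinv_0_lt_compat; auto.
    rewrite Rinv_r by lra. exact Hdiv. }
  assert (Hd : d <> Defs.C0).
  { intro E. subst d. unfold Cmul, Defs.C0 in H2. simpl in H2. lra. }
  assert (Hnd : 0 < Cnorm d) by (apply Cmod_gt_0; exact Hd).
  assert (Hlt0 : Cnorm (Cmul lb d) < Cnorm (Cmul la d)).
  { rewrite !Cn_mul. apply Rmult_lt_compat_r; auto. }
  assert (Hlt : Cnorm (Cmul lb d) ^ 2 < Cnorm (Cmul la d) ^ 2).
  { pose proof (Cn_ge0 (Cmul lb d)). nra. }
  rewrite !Cn_sq in Hlt.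
  set (u1 := fst (Cmul la d)) in *. set (u2 := snd (Cmul la d)) in *.
  set (w1 := fst (Cmul lb d)) in *. set (w2 := snd (Cmul lb d)) in *.
  assert (u1 = - w1) by lra. subst u1.
  nra.
Qed.

Lemma alg_I A B X p t p' : 0 <= A -> 0 <= B -> A + B = 1 -> 0 < p ->
  A*p^2 - X*p - B/(1+t^2) = 0 ->
  2*A*p*p' - X*p' + 2*B*t/(1+t^2)^2 = 0 ->
  0 < A*(p'*t + p) + B*(p*(1+t^2) - t*(p'*(1+t^2) + 2*t*p))/(p*(1+t^2))^2.
Proof.
  intros HA HB HAB Hp R0 R1.
  set (s := 1 + t^2) in *. assert (Hs : 0 < s) by (unfold s; nra).
  set (K := A*p^2*s + B).
  assert (HK : 0 < K).
  { unfold K. destruct (Rlt_or_le 0 A). assert (0 < A*p^2*s) by (apply Rmult_lt_0_compat; [apply Rmult_lt_0_compat; [lra| apply pow_lt; lra]| lra]). lra.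
    assert (A = 0) by lra. subst. nra. }
  assert (HX : X = A*p - B/(p*s)).
  { apply Rmult_eq_reg_r with p; [|lra]. replace ((A * p - B / (p * s)) * p) with (A*p^2 - B/s) by (field; lra). lra. }
  assert (Hp' : p' = -2*B*t*p/(s*K)).
  { rewrite HX in R1. apply Rmult_eq_reg_r with (K/(p*s)).
    2: { apply Rgt_not_eq. apply Rdiv_lt_0_compat; [lra|nra]. }
    replace (-2 * B * t * p / (s * K) * (K / (p * s))) with (-2*B*t/s^2) by (field; repeat split; lra).
    replace (p' * (K / (p * s))) with (2 * A * p * p' - (A * p - B / (p * s)) * p') by (unfold K; field; lra).
    lra. }
  rewrite Hp'.
  set (al := A*p^2*s).
  replace (A * (-2 * B * t * p / (s * K) * t + p) + B * (p * s - t * (-2 * B * t * p / (s * K) * s + 2 * t * p)) / (p * s) ^ 2)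
    with (((al+B)^2 + t^2*(al-B)^2)/(p*s^2*K)).
  2: { unfold al, K, s. field. split; [|split]; [change (K <> 0); lra | change (s <> 0); lra | lra]. }
  apply Rdiv_lt_0_compat.
  - assert (0 < al + B) by (change (0 < K); lra). apply Rplus_lt_le_0_compat; [apply pow_lt; lra | apply Rmult_le_pos; apply pow2_ge_0].
  - apply Rmult_lt_0_compat; [|lra]. apply Rmult_lt_0_compat; nra.
Qed.

Definition m1 P Q := (P^2+Q^2-1)/((P+1)^2+Q^2).
Definition m2 P Q := 2*Q/((P+1)^2+Q^2).
Definition c1 a x t := m1 (pp a x t) (pp a x t * t).
Definition c2 a x t := m2 (pp a x t) (pp a x t * t).
Definition cz a x t : Cplx := (c1 a x t, c2 a x t).

Section Der.
Variable a : R.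
Hypothesis Ha : -1 <= a <= 1.

Lemma cz_eq x t : valid a x -> zc a x t = cz a x t.
Proof.
  intros Hv. destruct (L_pp a Ha x t Hv) as [Hp _]. unfold zc, cz, c1, c2, m1, m2.
  apply Mm_eq; auto.
Qed.

Lemma cz_inE x t : valid a x -> inE (cz a x t).
Proof.
  intros Hv. rewrite <- cz_eq by auto. unfold zc. apply K1. apply L_pp; auto.
Qed.

Lemma pp_der_t x t : valid a x -> ex_derive (pp a x) t.
Proof.
  intros Hv. pose proof (AB_nonneg a Ha) as [HA [HB HAB]].
  unfold pp. destruct (Req_EM_T (AA a) 0) as [E|E].
  - destruct Hv as [[Hv _]|[_ Hv]]; [contradiction|].
    auto_derive. assert (0 < 1 + t*(t*1)) by nra. apply Rmult_integral_contrapositive. split; lra.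
  - pose proof (DD_pos a Ha x t Hv E) as HD. unfold DD in HD.
    unfold DD. auto_derive. split; [nra|split; [|exact I]]. unfold Rdiv in HD; simpl in HD; exact HD.
Qed.

Lemma pp_der_x x t : valid a x -> ex_derive (fun x => pp a x t) x.
Proof.
  intros Hv. pose proof (AB_nonneg a Ha) as [HA [HB HAB]].
  unfold pp. destruct (Req_EM_T (AA a) 0) as [E|E].
  - destruct Hv as [[Hv _]|[_ Hv]]; [contradiction|].
    unfold XX in *. auto_derive. assert (0 < 1 + t*(t*1)) by nra. apply Rmult_integral_contrapositive. split; lra.
  - pose proof (DD_pos a Ha x t Hv E) as HD. unfold DD, XX in HD.
    unfold DD, XX. auto_derive. unfold Rminus in HD. simpl in HD. exact HD.
Qed.

Lemma c_der_t x t : valid a x -> ex_derive (c1 a x) t /\ ex_derive (c2 a x) t.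
Proof.
  intros Hv. pose proof (pp_der_t x t Hv). destruct (L_pp a Ha x t Hv) as [Hp _].
  unfold c1, c2, m1, m2. split; auto_derive; repeat split; try assumption; nra.
Qed.

Lemma c_der_x x t : valid a x -> ex_derive (fun x => c1 a x t) x /\ ex_derive (fun x => c2 a x t) x.
Proof.
  intros Hv. pose proof (pp_der_x x t Hv). destruct (L_pp a Ha x t Hv) as [Hp _].
  unfold c1, c2, m1, m2. split; auto_derive; repeat split; try assumption; nra.
Qed.

End Der.

Section Main.
Variable a : R.
Hypothesis Ha : -1 <= a <= 1.
Variables h g : Cplx -> Cplx.
Hypothesis Hsum : forall z, inE z -> Cadd (h z) (g z) = shear_target a z.
Hypothesis Hh : analytic_on_E h.
Hypothesis Hg : analytic_on_E g.
Hypothesis Hlu : loc_univ_sense_pres h g.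

Lemma sum_fst x t : valid a x -> fst (h (cz a x t)) + fst (g (cz a x t)) = x.
Proof.
  intros Hv. rewrite <- (cz_eq a Ha x t Hv).
  change (fst (Cadd (h (zc a x t)) (g (zc a x t))) = x).
  rewrite Hsum. unfold zc. destruct (L_pp a Ha x t Hv) as [Hp HR]. apply L_re; auto.
  unfold zc. apply K1. apply L_pp; auto.
Qed.

Lemma sum_snd x t : valid a x -> snd (h (cz a x t)) + snd (g (cz a x t)) =
   (AA a * pp a x t * t + BB a * t / (pp a x t * (1+t^2)))/2.
Proof.
  intros Hv. rewrite <- (cz_eq a Ha x t Hv).
  change (snd (Cadd (h (zc a x t)) (g (zc a x t))) = (AA a * pp a x t * t + BB a * t / (pp a x t * (1+t^2)))/2).
  rewrite Hsum. unfold zc. destruct (L_pp a Ha x t Hv) as [Hp HR]. apply L_im; auto.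
  unfold zc. apply K1. apply L_pp; auto.
Qed.

Lemma dpl (f : R -> R) x : ex_derive f x -> derivable_pt_lim f x (Derive f x).
Proof. intros H. apply is_derive_Reals. apply Derive_correct. exact H. Qed.

Lemma k_der x t : valid a x -> exists D, 0 < D /\
  derivable_pt_lim (fun t => snd (harm h g (cz a x t))) t D.
Proof.
  intros Hv. pose proof (AB_nonneg a Ha) as [HA [HB HAB]].
  assert (Hz : inE (cz a x t)) by (apply cz_inE; auto).
  destruct (Hh _ Hz) as [lh Hlh]. destruct (Hg _ Hz) as [lg Hlg].
  destruct (Hlu _ Hz lh lg Hlh Hlg) as [Hne Hdil].
  destruct (c_der_t a Ha x t Hv) as [E1 E2].
  pose proof (dpl _ _ E1) as D1. pose proof (dpl _ _ E2) as D2.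
  set (d := (Derive (c1 a x) t, Derive (c2 a x) t) : Cplx).
  pose proof (chain_fst h (c1 a x) (c2 a x) t lh _ _ Hlh D1 D2) as Hh1.
  pose proof (chain_fst g (c1 a x) (c2 a x) t lg _ _ Hlg D1 D2) as Hg1.
  pose proof (chain_snd h (c1 a x) (c2 a x) t lh _ _ Hlh D1 D2) as Hh2.
  pose proof (chain_snd g (c1 a x) (c2 a x) t lg _ _ Hlg D1 D2) as Hg2.
  fold d in Hh1, Hg1, Hh2, Hg2.
  assert (F1 : fst (Cmul lh d) + fst (Cmul lg d) = 0).
  { pose proof (derivable_pt_lim_plus _ _ _ _ _ Hh1 Hg1) as S1.
    assert (Eq : ((fun t => fst (h (c1 a x t, c2 a x t))) + (fun t => fst (g (c1 a x t, c2 a x t))))%F = fun _ => x).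
    { apply functional_extensionality. intro u. unfold plus_fct. apply sum_fst; auto. }
    rewrite Eq in S1. eapply uniqueness_limite. exact S1. apply derivable_pt_lim_const. }
  set (p' := Derive (pp a x) t).
  set (p := pp a x t).
  pose proof (L_pp a Ha x t Hv) as [Hp HR].
  assert (Hpd : ex_derive (pp a x) t) by (apply pp_der_t; auto).
  assert (R1 : 2*AA a*p*p' - XX a x*p' + 2*BB a*t/(1+t^2)^2 = 0).
  { assert (Hd : derivable_pt_lim (fun u => AA a * pp a x u ^2 - XX a x * pp a x u - BB a/(1+u^2)) t
        (2*AA a*p*p' - XX a x*p' + 2*BB a*t/(1+t^2)^2)).
    { apply is_derive_Reals. auto_derive. repeat split; auto; nra.
      replace (Derive (fun x0 => pp a x x0) t) with p' by reflexivity. unfold p. field. nra. }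
    assert (Eq : (fun u => AA a * pp a x u ^2 - XX a x * pp a x u - BB a/(1+u^2)) = fun _ => 0).
    { apply functional_extensionality. intro u. apply (L_pp a Ha x u Hv). }
    rewrite Eq in Hd. eapply uniqueness_limite. exact Hd. apply derivable_pt_lim_const. }
  assert (F2 : snd (Cmul lh d) + snd (Cmul lg d) =
     (AA a*(p'*t + p) + BB a*(p*(1+t^2) - t*(p'*(1+t^2) + 2*t*p))/(p*(1+t^2))^2)/2).
  { pose proof (derivable_pt_lim_plus _ _ _ _ _ Hh2 Hg2) as S1.
    assert (Eq : ((fun t => snd (h (c1 a x t, c2 a x t))) + (fun t => snd (g (c1 a x t, c2 a x t))))%F =
      fun u => (AA a * pp a x u * u + BB a * u / (pp a x u * (1+u^2)))/2).
    { apply functional_extensionality. intro u. unfold plus_fct. apply sum_snd; auto. }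
    rewrite Eq in S1. eapply uniqueness_limite. exact S1.
    apply is_derive_Reals. auto_derive. repeat split; auto. apply Rmult_integral_contrapositive; split; nra.
    replace (Derive (fun x0 => pp a x x0) t) with p' by reflexivity. unfold p. field. split; nra. }
  assert (Hpos : 0 < snd (Cmul lh d) + snd (Cmul lg d)).
  { rewrite F2. apply Rdiv_lt_0_compat; [|lra]. eapply alg_I; eauto. }
  exists (snd (Cmul lh d) + - snd (Cmul lg d)). split.
  - pose proof (Alg lh lg d Hne Hdil F1 Hpos). lra.
  - change (derivable_pt_lim (fun t => snd (h (c1 a x t, c2 a x t)) + - snd (g (c1 a x t, c2 a x t))) t
      (snd (Cmul lh d) + - snd (Cmul lg d))).
    apply (derivable_pt_lim_plus _ _ _ _ _ Hh2 (derivable_pt_lim_opp _ _ _ Hg2)).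
Qed.

End Main.

Lemma cont_eps f x0 : continuity_pt f x0 -> forall eps, 0 < eps -> exists d, 0 < d /\
  forall x, Rabs (x - x0) < d -> Rabs (f x - f x0) < eps.
Proof.
  intros H eps He. destruct (H eps He) as [d [Hd P]]. exists d. split; auto.
  intros x Hx. destruct (Req_dec x x0) as [E|E].
  - subst. rewrite Rminus_diag, Rabs_R0. lra.
  - apply P. split. split; [exact I|auto]. simpl. unfold R_dist. auto.
Qed.

Lemma strict_incr (F : R -> R) : (forall t, exists D, 0 < D /\ derivable_pt_lim F t D) ->
  forall t1 t2, t1 < t2 -> F t1 < F t2.
Proof.
  intros H t1 t2 Ht.
  assert (HD : forall c, derivable_pt_lim F c (Derive F c) /\ 0 < Derive F c).
  { intro c. destruct (H c) as [D [HD P]]. 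
    assert (E : Derive F c = D) by (apply is_derive_unique; apply is_derive_Reals; exact P).
    rewrite E. auto. }
  destruct (MVT_cor2 F (Derive F) t1 t2 Ht) as [c [E Hc]].
  { intros c _. apply HD. }
  pose proof (proj2 (HD c)). nra.
Qed.

Lemma cont_of_der (F : R -> R) t : (exists D, derivable_pt_lim F t D) -> continuity_pt F t.
Proof.
  intros [D H]. apply derivable_continuous_pt. exists D. exact H.
Qed.

Section Glob.
Variable a : R.
Hypothesis Ha : -1 <= a <= 1.
Variables h g : Cplx -> Cplx.
Hypothesis Hsum : forall z, inE z -> Cadd (h z) (g z) = shear_target a z.
Hypothesis Hh : analytic_on_E h.
Hypothesis Hg : analytic_on_E g.
Hypothesis Hlu : loc_univ_sense_pres h g.

Lemma kx_cont x0 t : valid a x0 -> continuity_pt (fun x => snd (harm h g (cz a x t))) x0.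
Proof.
  intros Hv. apply cont_of_der.
  assert (Hz : inE (cz a x0 t)) by (apply cz_inE; auto).
  destruct (Hh _ Hz) as [lh Hlh]. destruct (Hg _ Hz) as [lg Hlg].
  destruct (c_der_x a Ha x0 t Hv) as [E1 E2].
  pose proof (dpl _ _ E1) as D1. pose proof (dpl _ _ E2) as D2.
  pose proof (chain_snd h (fun x => c1 a x t) (fun x => c2 a x t) x0 lh _ _ Hlh D1 D2) as Hh2.
  pose proof (chain_snd g (fun x => c1 a x t) (fun x => c2 a x t) x0 lg _ _ Hlg D1 D2) as Hg2.
  eexists.
  exact (derivable_pt_lim_plus _ _ _ _ _ Hh2 (derivable_pt_lim_opp _ _ _ Hg2)).
Qed.

Lemma fst_harm z : inE z -> fst (harm h g z) = fst (shear_target a z).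
Proof.
  intros Hz. rewrite <- Hsum by auto. reflexivity.
Qed.

Lemma rep z : inE z -> valid a (fst (harm h g z)) /\ exists t, z = cz a (fst (harm h g z)) t.
Proof.
  intros Hz. destruct (K3 z Hz) as [HP HM].
  set (P := fst (Wm z)) in *. set (Q := snd (Wm z)).
  set (t := Q / P).
  assert (EW : Wm z = (P, P*t)).
  { apply injective_projections; cbn [fst snd]; [reflexivity|]. unfold t, Q. field. lra. }
  rewrite EW in HM.
  assert (Hr : fst (shear_target a (Mm (P, P*t))) = fst (harm h g z)).
  { rewrite HM. symmetry. apply fst_harm; auto. }
  apply L_re in Hr; [|lra].
  destruct (L_uniq a Ha _ _ _ HP Hr) as [Hv EP].
  split; auto. exists t. rewrite <- cz_eq by auto. unfold zc. rewrite <- EP. symmetry. exact HM.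
Qed.

Lemma fst_cz x t : valid a x -> fst (harm h g (cz a x t)) = x.
Proof. intros Hv. apply (sum_fst a Ha h g Hsum); auto. Qed.

Lemma k_incr x : valid a x -> forall t1 t2, t1 < t2 ->
  snd (harm h g (cz a x t1)) < snd (harm h g (cz a x t2)).
Proof.
  intros Hv. apply (strict_incr (fun t => snd (harm h g (cz a x t)))).
  intro t. apply (k_der a Ha h g Hsum Hh Hg Hlu); auto.
Qed.

Lemma k_cont x : valid a x -> continuity (fun t => snd (harm h g (cz a x t))).
Proof.
  intros Hv t. apply cont_of_der. destruct (k_der a Ha h g Hsum Hh Hg Hlu x t Hv) as [D [_ P]].
  exists D; auto.
Qed.

Lemma ivt_k x t1 t2 y : valid a x -> t1 <= t2 ->
  snd (harm h g (cz a x t1)) <= y <= snd (harm h g (cz a x t2)) ->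
  exists t, harm h g (cz a x t) = (x, y).
Proof.
  intros Hv Ht Hy.
  assert (Hex : exists t, snd (harm h g (cz a x t)) = y).
  { destruct (Req_dec (snd (harm h g (cz a x t1))) y) as [E|E]; [exists t1; auto|].
    destruct (Req_dec (snd (harm h g (cz a x t2))) y) as [E'|E']; [exists t2; auto|].
    assert (Ht' : t1 < t2). { destruct Ht; auto. subst. lra. }
    assert (L1 : snd (harm h g (cz a x t1)) < y) by (destruct Hy as [Hy1 _]; destruct Hy1; [auto | contradiction]).
    assert (L2 : y < snd (harm h g (cz a x t2))) by (destruct Hy as [_ Hy1]; destruct Hy1; [auto | subst; contradiction]).
    destruct (IVT (fun t => snd (harm h g (cz a x t)) - y) t1 t2) as [t [_ Et]].
    - apply continuity_minus; [apply k_cont; auto|apply continuity_const; intros ? ?; reflexivity].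
    - exact Ht'.
    - cbv beta. lra.
    - cbv beta. lra.
    - exists t. cbv beta in Et. lra. }
  destruct Hex as [t Et]. exists t. apply injective_projections; simpl.
  - apply fst_cz; auto.
  - exact Et.
Qed.

End Glob.

Lemma conn1 (gam : R -> Cplx) (U V : Cplx -> Prop) :
  Defs.open_set U -> Defs.open_set V ->
  (forall l, 0 <= l <= 1 -> forall eps, 0 < eps -> exists d, 0 < d /\
      forall m, Rabs (m - l) < d -> Cnorm (Csub (gam m) (gam l)) < eps) ->
  (forall l, 0 <= l <= 1 -> U (gam l) \/ V (gam l)) ->
  U (gam 0) -> V (gam 1) -> exists l, 0 <= l <= 1 /\ U (gam l) /\ V (gam l).
Proof.
  intros HU HV Hc Hcov H0 H1.
  apply NNPP. intro Hno.
  assert (Hno' : forall l, 0 <= l <= 1 -> U (gam l) -> V (gam l) -> False).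
  { intros l Hl Hu Hv. apply Hno. exists l. auto. }
  set (Es := fun l => 0 <= l <= 1 /\ forall m, 0 <= m <= l -> U (gam m)).
  assert (Hb : bound Es). { exists 1. intros l [Hl _]. lra. }
  assert (He : exists l, Es l).
  { exists 0. split; [lra|]. intros m Hm. replace m with 0 by lra. auto. }
  destruct (completeness Es Hb He) as [M [HM1 HM2]].
  assert (HM0 : 0 <= M). { apply HM1. split; [lra|]. intros m Hm. replace m with 0 by lra. auto. }
  assert (HM1' : M <= 1). { apply HM2. intros l [Hl _]. lra. }
  assert (Key : forall m, 0 <= m < M -> U (gam m)).
  { intros m Hm. apply NNPP. intro Hn.
    assert (M <= m). { apply HM2. intros l [Hl Hl2]. destruct (Rle_or_lt l m); auto.
      exfalso. apply Hn. apply Hl2. lra. }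
    lra. }
  destruct (classic (U (gam M))) as [HuM|HuM].
  - destruct (HU _ HuM) as [r [Hr Pr]].
    destruct (Hc M (conj HM0 HM1') r Hr) as [d [Hd Pd]].
    destruct (Req_dec M 1) as [E|E].
    + subst. apply (Hno' 1); auto; lra.
    + set (M' := Rmin (M + d/2) 1).
      assert (HM' : M < M'). { unfold M'. apply Rmin_glb_lt; lra. }
      assert (Es M').
      { split. unfold M'. split. pose proof (Rmin_r (M+d/2) 1). 
        apply Rmin_glb; lra. apply Rmin_r.
        intros m Hm. destruct (Rlt_or_le m M) as [Hl|Hl]. apply Key; lra.
        apply Pr. apply Pd. pose proof (Rmin_l (M+d/2) 1). 
        rewrite Rabs_right by lra. unfold M' in Hm. lra. }
      pose proof (HM1 _ H). lra.
  - assert (HvM : V (gam M)). { destruct (Hcov M (conj HM0 HM1')); auto. contradiction. }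
    destruct (HV _ HvM) as [r [Hr Pr]].
    destruct (Hc M (conj HM0 HM1') r Hr) as [d [Hd Pd]].
    destruct (Req_dec M 0) as [E|E].
    + subst. contradiction.
    + set (m := Rmax (M - d/2) 0).
      assert (Hm : 0 <= m < M). { unfold m. split. apply Rmax_r. apply Rmax_lub_lt; lra. }
      apply (Hno' m). lra. apply Key; auto.
      apply Pr. apply Pd. rewrite Rabs_left1 by lra. unfold m.
      pose proof (Rmax_l (M - d/2) 0). lra.
Qed.

Section Glob2.
Variable a : R.
Hypothesis Ha : -1 <= a <= 1.
Variables h g : Cplx -> Cplx.
Hypothesis Hsum : forall z, inE z -> Cadd (h z) (g z) = shear_target a z.
Hypothesis Hh : analytic_on_E h.
Hypothesis Hg : analytic_on_E g.
Hypothesis Hlu : loc_univ_sense_pres h g.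

Let f := harm h g.

Lemma univ z1 z2 : inE z1 -> inE z2 -> f z1 = f z2 -> z1 = z2.
Proof.
  intros H1 H2 E.
  destruct (rep a Ha h g Hsum z1 H1) as [Hv1 [t1 E1]].
  destruct (rep a Ha h g Hsum z2 H2) as [Hv2 [t2 E2]].
  unfold f in E. rewrite <- E in E2.
  set (x := fst (harm h g z1)) in *.
  assert (S1 : snd (harm h g (cz a x t1)) = snd (harm h g z1)) by (rewrite <- E1; reflexivity).
  assert (S2 : snd (harm h g (cz a x t2)) = snd (harm h g z1)) by (rewrite E, <- E2; reflexivity).
  destruct (total_order_T t1 t2) as [[L|L]|L].
  - pose proof (k_incr a Ha h g Hsum Hh Hg Hlu x Hv1 t1 t2 L). lra.
  - transitivity (cz a x t1). exact E1. rewrite L. symmetry. exact E2.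
  - pose proof (k_incr a Ha h g Hsum Hh Hg Hlu x Hv1 t2 t1 L). lra.
Qed.

Lemma convex : convex_imag_dir (imageE f).
Proof.
  intros x y1 y2 y [z1 [H1 E1]] [z2 [H2 E2]] L1 L2.
  destruct (rep a Ha h g Hsum z1 H1) as [Hv1 [t1 F1]].
  destruct (rep a Ha h g Hsum z2 H2) as [Hv2 [t2 F2]].
  unfold f in E1, E2. rewrite E1 in Hv1, F1. rewrite E2 in Hv2, F2. simpl in Hv1, F1, Hv2, F2.
  assert (S1 : snd (harm h g (cz a x t1)) = y1) by (rewrite <- F1, E1; reflexivity).
  assert (S2 : snd (harm h g (cz a x t2)) = y2) by (rewrite <- F2, E2; reflexivity).
  destruct (Rle_or_lt t1 t2) as [L|L].
  - destruct (ivt_k a Ha h g Hsum Hh Hg Hlu x t1 t2 y Hv1 L) as [t Et]. lra.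
    exists (cz a x t). split. apply cz_inE; auto. exact Et.
  - pose proof (k_incr a Ha h g Hsum Hh Hg Hlu x Hv1 t2 t1 L). lra.
Qed.

End Glob2.

Lemma valid_open a x0 : valid a x0 -> exists eta, 0 < eta /\ forall x, Rabs (x - x0) < eta -> valid a x.
Proof.
  intros Hv. unfold valid in *.
  destruct Hv as [[HA [HB|HX]]|[HA HX]].
  - exists 1. split; [lra|]. intros. left. auto.
  - exists (XX a x0 / 2). split; [lra|]. intros x Hx. left. split; auto. right.
    unfold XX in *. apply Rabs_def2 in Hx. lra.
  - exists (- XX a x0 / 2). split; [lra|]. intros x Hx. right. split; auto.
    unfold XX in *. apply Rabs_def2 in Hx. lra.
Qed.

Section Glob3.
Variable a : R.
Hypothesis Ha : -1 <= a <= 1.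
Variables h g : Cplx -> Cplx.
Hypothesis Hsum : forall z, inE z -> Cadd (h z) (g z) = shear_target a z.
Hypothesis Hh : analytic_on_E h.
Hypothesis Hg : analytic_on_E g.
Hypothesis Hlu : loc_univ_sense_pres h g.

Lemma f_cont z0 : inE z0 -> forall eps, 0 < eps -> exists d, 0 < d /\
  forall w, Cnorm (Csub w z0) < d -> Cnorm (Csub (harm h g w) (harm h g z0)) < eps.
Proof.
  intros Hz eps He.
  destruct (Hh _ Hz) as [lh Hlh]. destruct (Hg _ Hz) as [lg Hlg].
  destruct (cderiv_cont _ _ _ Hlh (eps/2)) as [d1 [Hd1 P1]]; [lra|].
  destruct (cderiv_cont _ _ _ Hlg (eps/2)) as [d2 [Hd2 P2]]; [lra|].
  exists (Rmin d1 d2). split. apply Rmin_pos; auto. intros w Hw.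
  replace (Csub (harm h g w) (harm h g z0)) with (Cadd (Csub (h w) (h z0)) (Defs.Cconj (Csub (g w) (g z0)))) by (unfold harm; ceq).
  eapply Rle_lt_trans. apply Cn_tri. rewrite Cn_conj.
  pose proof (P1 w (Rlt_le_trans _ _ _ Hw (Rmin_l _ _))).
  pose proof (P2 w (Rlt_le_trans _ _ _ Hw (Rmin_r _ _))). lra.
Qed.

Lemma open_img : Defs.open_set (imageE (harm h g)).
Proof.
  intros w [z0 [Hz0 E0]].
  destruct (rep a Ha h g Hsum z0 Hz0) as [Hv [t0 F0]].
  rewrite E0 in Hv, F0. set (x0 := fst w) in *. set (y0 := snd w).
  set (K := fun x t => snd (harm h g (cz a x t))).
  assert (Ky : K x0 t0 = y0) by (unfold K, y0; rewrite <- F0, E0; reflexivity).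
  pose proof (k_incr a Ha h g Hsum Hh Hg Hlu x0 Hv (t0-1) t0 ltac:(lra)) as L1.
  pose proof (k_incr a Ha h g Hsum Hh Hg Hlu x0 Hv t0 (t0+1) ltac:(lra)) as L2.
  fold (K x0 (t0-1)) (K x0 t0) (K x0 (t0+1)) in L1, L2. rewrite Ky in L1, L2.
  set (eps := Rmin (y0 - K x0 (t0-1)) (K x0 (t0+1) - y0) / 2).
  assert (Heps : 0 < eps) by (unfold eps; apply Rmult_lt_0_compat; [apply Rmin_pos; lra|lra]).
  assert (Heps1 : eps <= (y0 - K x0 (t0-1))/2) by (unfold eps; pose proof (Rmin_l (y0 - K x0 (t0-1)) (K x0 (t0+1) - y0)); lra).
  assert (Heps2 : eps <= (K x0 (t0+1) - y0)/2) by (unfold eps; pose proof (Rmin_r (y0 - K x0 (t0-1)) (K x0 (t0+1) - y0)); lra).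
  destruct (cont_eps _ _ (kx_cont a Ha h g Hh Hg x0 (t0-1) Hv) eps Heps) as [d1 [Hd1 P1]].
  destruct (cont_eps _ _ (kx_cont a Ha h g Hh Hg x0 (t0+1) Hv) eps Heps) as [d2 [Hd2 P2]].
  destruct (valid_open a x0 Hv) as [eta [Heta Pv]].
  exists (Rmin (Rmin eps d1) (Rmin d2 eta)). split.
  { apply Rmin_pos; apply Rmin_pos; auto. }
  intros v Hvw.
  assert (Hx : Rabs (fst v - x0) < Rmin (Rmin eps d1) (Rmin d2 eta)).
  { eapply Rle_lt_trans; [|exact Hvw]. eapply Rle_trans; [|apply Cn_fst]. right. reflexivity. }
  assert (Hy : Rabs (snd v - y0) < Rmin (Rmin eps d1) (Rmin d2 eta)).
  { eapply Rle_lt_trans; [|exact Hvw]. eapply Rle_trans; [|apply Cn_snd]. right. reflexivity. }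
  pose proof (Rmin_l (Rmin eps d1) (Rmin d2 eta)). pose proof (Rmin_r (Rmin eps d1) (Rmin d2 eta)).
  pose proof (Rmin_l eps d1). pose proof (Rmin_r eps d1). pose proof (Rmin_l d2 eta). pose proof (Rmin_r d2 eta).
  assert (Hvx : valid a (fst v)) by (apply Pv; lra).
  specialize (P1 (fst v) ltac:(lra)). specialize (P2 (fst v) ltac:(lra)).
  fold (K (fst v) (t0-1)) (K x0 (t0-1)) in P1. fold (K (fst v) (t0+1)) (K x0 (t0+1)) in P2.
  apply Rabs_def2 in P1. apply Rabs_def2 in P2. apply Rabs_def2 in Hy.
  destruct (ivt_k a Ha h g Hsum Hh Hg Hlu (fst v) (t0-1) (t0+1) (snd v) Hvx ltac:(lra)) as [t Et].
  { fold (K (fst v) (t0-1)) (K (fst v) (t0+1)). lra. }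
  exists (cz a (fst v) t). split. apply cz_inE; auto. rewrite Et. destruct v; reflexivity.
Qed.

End Glob3.

Lemma inE_scale l z : 0 <= l <= 1 -> inE z -> inE (Cmul (Defs.RtoC l) z).
Proof.
  intros Hl Hz. unfold inE in *. rewrite Cn_mul, Cn_RtoC, Rabs_right by lra.
  pose proof (Cn_ge0 z). nra.
Qed.

Lemma inE_0 : inE (0,0).
Proof. apply inE_iff. lra. Qed.

Section Glob4.
Variable a : R.
Hypothesis Ha : -1 <= a <= 1.
Variables h g : Cplx -> Cplx.
Hypothesis Hsum : forall z, inE z -> Cadd (h z) (g z) = shear_target a z.
Hypothesis Hh : analytic_on_E h.
Hypothesis Hg : analytic_on_E g.
Hypothesis Hlu : loc_univ_sense_pres h g.

Lemma path_cont z : inE z -> forall l, 0 <= l <= 1 -> forall eps, 0 < eps -> exists d, 0 < d /\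
  forall m, Rabs (m - l) < d ->
    Cnorm (Csub (harm h g (Cmul (Defs.RtoC m) z)) (harm h g (Cmul (Defs.RtoC l) z))) < eps.
Proof.
  intros Hz l Hl eps He.
  destruct (f_cont h g Hh Hg _ (inE_scale l z Hl Hz) eps He) as [d [Hd P]].
  pose proof (Cn_ge0 z).
  exists (d / (Cnorm z + 1)). split. apply Rdiv_lt_0_compat; lra.
  intros m Hm. apply P.
  replace (Csub (Cmul (Defs.RtoC m) z) (Cmul (Defs.RtoC l) z)) with (Cmul (Defs.RtoC (m - l)) z) by ceq.
  rewrite Cn_mul, Cn_RtoC.
  apply Rle_lt_trans with (Rabs (m - l) * (Cnorm z + 1)). apply Rmult_le_compat_l. apply Rabs_pos. lra.
  apply Rmult_lt_reg_r with (/ (Cnorm z + 1)). apply Rinv_0_lt_compat; lra.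
  rewrite Rmult_assoc, Rinv_r by lra. lra.
Qed.

Lemma conn_img : connected_set (imageE (harm h g)).
Proof.
  intros U V HU HV Hcov [w1 [[z1 [Hz1 E1]] Hu1]] [w2 [[z2 [Hz2 E2]] Hv2]].
  assert (Z0 : forall z, Cmul (Defs.RtoC 0) z = (0,0)) by (intros; ceq).
  assert (Z1 : forall z, Cmul (Defs.RtoC 1) z = z) by (intros z; destruct z; ceq).
  assert (Sl : forall z l, inE z -> 0 <= l <= 1 -> imageE (harm h g) (harm h g (Cmul (Defs.RtoC l) z))).
  { intros z l Hz Hl. exists (Cmul (Defs.RtoC l) z). split; auto. apply inE_scale; auto. }
  destruct (Hcov (harm h g (0,0))) as [H0|H0].
  { exists (0,0). split; auto. apply inE_0. }
  - destruct (conn1 (fun l => harm h g (Cmul (Defs.RtoC l) z2)) U V HU HV) as [l [Hl [Hu Hv]]].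
    + intros l Hl. apply path_cont; auto.
    + intros l Hl. apply Hcov. apply Sl; auto.
    + cbv beta. rewrite Z0. exact H0.
    + cbv beta. rewrite Z1, E2. exact Hv2.
    + exists (harm h g (Cmul (Defs.RtoC l) z2)). split; [apply Sl; auto|auto].
  - destruct (conn1 (fun l => harm h g (Cmul (Defs.RtoC l) z1)) V U HV HU) as [l [Hl [Hv Hu]]].
    + intros l Hl. apply path_cont; auto.
    + intros l Hl. pose proof (Sl z1 l Hz1 Hl) as S. destruct (Hcov _ S); auto.
    + cbv beta. rewrite Z0. exact H0.
    + cbv beta. rewrite Z1, E1. exact Hu1.
    + exists (harm h g (Cmul (Defs.RtoC l) z1)). split; [apply Sl; auto|auto].
Qed.

End Glob4.

Lemma st_lin t a1 a2 z :
  Cadd (Cmul (Defs.RtoC t) (shear_target a1 z)) (Cmul (Defs.RtoC (1-t)) (shear_target a2 z)) =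
  shear_target (t*a1 + (1-t)*a2) z.
Proof.
  unfold shear_target, Defs.Cdiv.
  generalize (Defs.Cinv (Csub Defs.C1 (Cmul z z))). intros D. destruct D, z. ceq.
Qed.

Lemma lincomb_der t f1 f2 z l1 l2 : cderiv_at f1 z l1 -> cderiv_at f2 z l2 ->
  cderiv_at (lincomb t f1 f2) z (Cadd (Cmul (Defs.RtoC t) l1) (Cmul (Defs.RtoC (1-t)) l2)).
Proof.
  intros H1 H2. unfold lincomb.
  apply (cderiv_add (fun w => Cmul (Defs.RtoC t) (f1 w)) (fun w => Cmul (Defs.RtoC (1-t)) (f2 w)));
  apply cderiv_cmul; auto.
Qed.

Lemma lincomb_an t f1 f2 : analytic_on_E f1 -> analytic_on_E f2 -> analytic_on_E (lincomb t f1 f2).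
Proof.
  intros H1 H2 z Hz. destruct (H1 z Hz) as [l1 P1]. destruct (H2 z Hz) as [l2 P2].
  eexists. apply lincomb_der; eauto.
Qed.

Import Pilot.Defs.

Theorem theorem2p1 (alpha1 alpha2 t : R) (h1 g1 h2 g2 : Cplx -> Cplx) :
  -1 <= alpha1 <= 1 -> -1 <= alpha2 <= 1 ->
  in_SH h1 g1 -> in_SH h2 g2 ->
  (forall z, inE z -> Cadd (h1 z) (g1 z) = shear_target alpha1 z) ->
  (forall z, inE z -> Cadd (h2 z) (g2 z) = shear_target alpha2 z) ->
  0 <= t <= 1 ->
  loc_univ_sense_pres (lincomb t h1 h2) (lincomb t g1 g2) ->
  in_SH (lincomb t h1 h2) (lincomb t g1 g2) /\
  domain (imageE (harm (lincomb t h1 h2) (lincomb t g1 g2))) /\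
  convex_imag_dir (imageE (harm (lincomb t h1 h2) (lincomb t g1 g2))).
Proof.
  intros Ha1 Ha2 [Ah1 [Ag1 [_ [_ [Z1 D1]]]]] [Ah2 [Ag2 [_ [_ [Z2 D2]]]]] S1 S2 Ht Hlu.
  set (a := t*alpha1 + (1-t)*alpha2).
  assert (Ha : -1 <= a <= 1) by (unfold a; nra).
  set (h := lincomb t h1 h2). set (g := lincomb t g1 g2).
  assert (Hsum : forall z, inE z -> Cadd (h z) (g z) = shear_target a z).
  { intros z Hz. unfold a. rewrite <- st_lin. rewrite <- S1, <- S2 by auto.
    unfold h, g, lincomb. ceq. }
  assert (Hh : analytic_on_E h) by (apply lincomb_an; auto).
  assert (Hg : analytic_on_E g) by (apply lincomb_an; auto).
  assert (Hharm : forall z, harm h g z = Cadd (Cmul (Defs.RtoC t) (harm h1 g1 z)) (Cmul (Defs.RtoC (1-t)) (harm h2 g2 z))).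
  { intros z. unfold h, g, harm, lincomb. ceq. }
  split; [|split].
  - split; [auto|split; [auto|split; [|split; [auto|split]]]].
    + intros z w Hz Hw E. apply (univ a Ha h g Hsum Hh Hg Hlu z w Hz Hw E).
    + rewrite Hharm, Z1, Z2. ceq.
    + pose proof (lincomb_der t h1 h2 Defs.C0 _ _ D1 D2) as D.
      replace (Cadd (Cmul (Defs.RtoC t) Defs.C1) (Cmul (Defs.RtoC (1 - t)) Defs.C1)) with Defs.C1 in D by ceq.
      exact D.
  - split; [apply (open_img a Ha h g Hsum Hh Hg Hlu)|split; [apply (conn_img h g Hh Hg)|]].
    exists (harm h g (0,0)). exists (0,0). split; auto. apply inE_0.
  - apply (convex a Ha h g Hsum Hh Hg Hlu).
Qed.
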